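(* For every class of closed formulas $\mathbb{P}$ and every $n$, every safety problem provable in $\mathbf{FI}^{\mathbb{P}}_n$ is also provable in $\mathbf{F}^{\wedge_n\mathbb{P}}$. Moreover, for every $n>0$ there exist a class of predicates $\mathbb{P}$ and a safety problem $\Pi$ such that $\Pi$ is provable in $\mathbf{FI}^{\mathbb{P}}_n$ but not provable in $\mathbf{FI}^{\mathbb{P}}_{n-1}$.
   Context: A first-order vocabulary $\Sigma$ consists of constant, function and relation symbols; $\Sigma'=\{a' : a\in\Sigma\}$ is a disjoint copy, and for a formula $\varphi$ over $\Sigma$, $\varphi'$ denotes $\varphi$ with every symbol replaced by its primed copy. A safety problem is a triple $(\iota,\tau,\beta)$, where $\iota,\beta$ are closed formulas over $\Sigma$ and $\tau$ is a closed formula over $\Sigma\uplus\Sigma'$. $A\Rightarrow B$ means the implication $A\to B$ is valid. Proofs: a proof of $\Pi$ in a system is a finite tree whose nodes are safety problems, whose root is $\Pi$, and in which each node together with its children is an instance of one of the system's inference rules, with side conditions valid. Rules ($\varphi$ ranges over closed formulas over $\Sigma$): (Ind): no premises; conclusion $(\iota,\tau,\neg\varphi)$; side conditions $\iota\Rightarrow\varphi$ and $\varphi\wedge\tau\Rightarrow\varphi'$. (Cons): premise $(\iota,\tau,\neg\varphi)$; conclusion $(\iota,\tau,\beta)$; side condition $\varphi\Rightarrow\neg\beta$. (Inc): premises $(\iota,\tau,\neg\varphi)$ and $(\iota\wedge\varphi,\ \tau\wedge\varphi\wedge\varphi',\ \beta\wedge\varphi)$; conclusion $(\iota,\tau,\beta)$.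 $\mathbf{F}$ consists of (Ind) and (Cons); $\mathbf{FI}$ consists of (Ind), (Cons), (Inc). For a class of closed formulas $\mathbb{P}$, $\mathbf{F}^{\mathbb{P}}$ (resp. $\mathbf{FI}^{\mathbb{P}}$) restricts applications of (Ind) to $\varphi\in\mathbb{P}$, and $\mathbf{FI}^{\mathbb{P}}_n$ further restricts proofs to use at most $n$ applications of (Ind). $\wedge_n\mathbb{P}$ denotes the class of conjunctions of at most $n$ predicates from $\mathbb{P}$. *)

(* Defs.v *)
From mathcomp Require Import all_boot.

Unset Printing Implicit Defensive.

Record vocab := Vocab {
  fsym : Type;
  far : fsym -> nat;
  rsym : Type;
  rar : rsym -> nat
}.
Arguments far {v} _.
Arguments rar {v} _.

(* Sigma ⊎ Sigma' : each symbol tagged by a boolean, true = primed copy. *)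
Definition dbl (S : vocab) : vocab :=
  {| fsym := (bool * fsym S)%type; far := fun p => far p.2;
     rsym := (bool * rsym S)%type; rar := fun p => rar p.2 |}.

Inductive term (S : vocab) : Type :=
| Var : nat -> term S
| App : forall f : fsym S, ('I_(far f) -> term S) -> term S.

Inductive form (S : vocab) : Type :=
| FFalse : form S
| FTrue : form S
| FEq : term S -> term S -> form S
| FRel : forall r : rsym S, ('I_(rar r) -> term S) -> form S
| FNot : form S -> form S
| FAnd : form S -> form S -> form S
| FOr : form S -> form S -> form S
| FImp : form S -> form S -> form S
| FAll : nat -> form S -> form S
| FEx : nat -> form S -> form S.

Arguments FFalse {S}.
Arguments Var {S} _.
Arguments App {S} f _.
Arguments FEq {S} _ _.
Arguments FRel {S} r _.
Arguments FNot {S} _.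
Arguments FAnd {S} _ _.
Arguments FOr {S} _ _.
Arguments FImp {S} _ _.
Arguments FAll {S} _ _.
Arguments FEx {S} _ _.
Arguments FTrue {S}.

Fixpoint occurs_term {S : vocab} (x : nat) (t : term S) : Prop :=
  match t with
  | Var y => x = y
  | App f args => exists i, occurs_term x (args i)
  end.

Fixpoint free_in {S : vocab} (x : nat) (phi : form S) : Prop :=
  match phi with
  | FFalse | FTrue => False
  | FEq t u => occurs_term x t \/ occurs_term x u
  | FRel r args => exists i, occurs_term x (args i)
  | FNot p => free_in x p
  | FAnd p q | FOr p q | FImp p q => free_in x p \/ free_in x q
  | FAll y p | FEx y p => x <> y /\ free_in x p
  end.

Definition closed {S : vocab} (phi : form S) : Prop := forall x, ~ free_in x phi.

Fixpoint tag_term {S : vocab} (b : bool) (t : term S) : term (dbl S) :=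
  match t with
  | Var y => @Var (dbl S) y
  | App f args => @App (dbl S) (b, f) (fun i => tag_term b (args i))
  end.

Fixpoint tag_form {S : vocab} (b : bool) (phi : form S) : form (dbl S) :=
  match phi with
  | FFalse => FFalse
  | FTrue => FTrue
  | FEq t u => FEq (tag_term b t) (tag_term b u)
  | FRel r args => @FRel (dbl S) (b, r) (fun i => tag_term b (args i))
  | FNot p => FNot (tag_form b p)
  | FAnd p q => FAnd (tag_form b p) (tag_form b q)
  | FOr p q => FOr (tag_form b p) (tag_form b q)
  | FImp p q => FImp (tag_form b p) (tag_form b q)
  | FAll y p => FAll y (tag_form b p)
  | FEx y p => FEx y (tag_form b p)
  end.

Definition unprimed {S : vocab} (phi : form S) : form (dbl S) := tag_form false phi.
Definition primed {S : vocab} (phi : form S) : form (dbl S) := tag_form true phi.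

Record structure (S : vocab) := Structure {
  dom : Type;
  dom_inh : dom;
  fint : forall f : fsym S, ('I_(far f) -> dom) -> dom;
  rint : forall r : rsym S, ('I_(rar r) -> dom) -> Prop
}.
Arguments dom {S} s.
Arguments fint {S} s f _.
Arguments rint {S} s r _.

Definition upd {D : Type} (rho : nat -> D) (x : nat) (d : D) : nat -> D :=
  fun y => if y == x then d else rho y.

Fixpoint eval {S : vocab} (M : structure S) (rho : nat -> dom M) (t : term S)
  : dom M :=
  match t with
  | Var y => rho y
  | App f args => fint M f (fun i => eval M rho (args i))
  end.

Fixpoint holds {S : vocab} (M : structure S) (rho : nat -> dom M) (phi : form S)
  : Prop :=
  match phi with
  | FFalse => False
  | FTrue => True
  | FEq t u => eval M rho t = eval M rho u
  | FRel r args => rint M r (fun i => eval M rho (args i))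
  | FNot p => ~ holds M rho p
  | FAnd p q => holds M rho p /\ holds M rho q
  | FOr p q => holds M rho p \/ holds M rho q
  | FImp p q => holds M rho p -> holds M rho q
  | FAll y p => forall d : dom M, holds M (upd rho y d) p
  | FEx y p => exists d : dom M, holds M (upd rho y d) p
  end.

Definition valid {S : vocab} (phi : form S) : Prop :=
  forall (M : structure S) (rho : nat -> dom M), holds M rho phi.

Definition entails {S : vocab} (A B : form S) : Prop := valid (FImp A B).

Record problem (S : vocab) := Problem {
  p_init : form S;
  p_trans : form (dbl S);
  p_bad : form S
}.
Arguments Problem {S} _ _ _.
Arguments p_init {S} _.
Arguments p_trans {S} _.
Arguments p_bad {S} _.

Definition is_safety_problem {S : vocab} (Pi : problem S) : Prop :=
  closed (p_init Pi) /\ closed (p_trans Pi) /\ closed (p_bad Pi).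

(* derives inc P Pi k : there is a proof tree of Pi using rules (Ind), (Cons),
   and additionally (Inc) when inc = true, in which every application of (Ind)
   uses a formula in P, and (Ind) is applied exactly k times.  *)
Inductive derives {S : vocab} (inc : bool) (P : form S -> Prop)
  : problem S -> nat -> Prop :=
| d_ind (iota : form S) (tau : form (dbl S)) (phi : form S) :
    closed phi -> P phi ->
    entails iota phi ->
    entails (FAnd (unprimed phi) tau) (primed phi) ->
    derives inc P (Problem iota tau (FNot phi)) 1
| d_cons (iota : form S) (tau : form (dbl S)) (beta phi : form S) (k : nat) :
    closed phi ->
    derives inc P (Problem iota tau (FNot phi)) k ->
    entails phi (FNot beta) ->
    derives inc P (Problem iota tau beta) k
| d_inc (iota : form S) (tau : form (dbl S)) (beta phi : form S) (k1 k2 : nat) :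
    inc = true ->
    closed phi ->
    derives inc P (Problem iota tau (FNot phi)) k1 ->
    derives inc P (Problem (FAnd iota phi)
                           (FAnd tau (FAnd (unprimed phi) (primed phi)))
                           (FAnd beta phi)) k2 ->
    derives inc P (Problem iota tau beta) (k1 + k2).

Definition provable_F {S : vocab} (P : form S -> Prop) (Pi : problem S) : Prop :=
  exists k, derives false P Pi k.

Definition provable_FI_n {S : vocab} (P : form S -> Prop) (n : nat)
  (Pi : problem S) : Prop :=
  exists k, k <= n /\ derives true P Pi k.

Definition closed_class {S : vocab} (P : form S -> Prop) : Prop :=
  forall phi, P phi -> closed phi.

Definition big_and {S : vocab} (phi : form S) (l : seq (form S)) : form S :=
  foldl (@FAnd S) phi l.

Definition wedge_n {S : vocab} (n : nat) (P : form S -> Prop) (psi : form S)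
  : Prop :=
  exists (phi : form S) (l : seq (form S)),
    (size l).+1 <= n /\ P phi /\ (forall i, i < size l -> P (nth phi l i)) /\ psi = big_and phi l.

(* Main.v *)
From Stdlib Require Import Classical FunctionalExtensionality.
Require Import Defs.
From mathcomp Require Import all_boot.

Fixpoint allQ {T : Type} (Q : T -> Prop) (L : seq T) : Prop :=
  match L with nil => True | x :: L' => Q x /\ allQ Q L' end.

Lemma allQ_cat {T} (Q : T -> Prop) L1 L2 : allQ Q (L1 ++ L2) <-> allQ Q L1 /\ allQ Q L2.
Proof. elim: L1 => [|x L IH] /=; [tauto|]. rewrite IH; tauto. Qed.

Lemma allQ_impl {T} (Q R : T -> Prop) L : (forall x, Q x -> R x) -> allQ Q L -> allQ R L.
Proof. move=> H; elim: L => [|x L IH] //= [] ? ?; split; auto. Qed.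

Definition red {S : vocab} (b : bool) (M : structure (dbl S)) : structure S :=
  {| dom := dom M; dom_inh := dom_inh _ M;
     fint := fun f args => fint M (b, f) args;
     rint := fun r args => rint M (b, r) args |}.

Lemma eval_tag {S : vocab} b (M : structure (dbl S)) rho (t : term S) :
  eval M rho (tag_term b t) = eval (red b M) rho t.
Proof.
  elim: t => [y|f args IH] //=.
  have -> : (fun i => eval M rho (tag_term b (args i))) = (fun i => eval (red b M) rho (args i)).
    by apply: functional_extensionality => i; apply: IH.
  by [].
Qed.

Lemma holds_tag {S : vocab} b (M : structure (dbl S)) (phi : form S) :
  forall rho, holds M rho (tag_form b phi) <-> holds (red b M) rho phi.
Proof.
  elim: phi => //=.
  - by move=> t u rho; rewrite !eval_tag.
  - move=> r args rho.
    have -> : (fun i => eval M rho (tag_term b (args i))) = (fun i => eval (red b M) rho (args i)).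
      by apply: functional_extensionality => i; apply: eval_tag.
    by [].
  - by move=> p IH rho; rewrite IH.
  - by move=> p IHp q IHq rho; rewrite IHp IHq.
  - by move=> p IHp q IHq rho; rewrite IHp IHq.
  - by move=> p IHp q IHq rho; rewrite IHp IHq.
  - move=> y p IH rho; split=> H d; by apply/IH.
  - move=> y p IH rho; split=> [[d H]|[d H]]; exists d; by apply/IH.
Qed.

Definition Inv {S : vocab} (iota : form S) (tau : form (dbl S)) (beta : form S)
  (L : seq (form S)) : Prop :=
  (forall M rho, holds M rho iota -> allQ (holds M rho) L) /\
  (forall (M : structure (dbl S)) rho, allQ (holds (red false M) rho) L ->
      holds M rho tau -> allQ (holds (red true M) rho) L) /\
  (forall M rho, allQ (holds M rho) L -> ~ holds M rho beta).

Lemma inv_of_deriv {S : vocab} (P : form S -> Prop) Pi k :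
  derives true P Pi k ->
  exists L, size L = k /\ 0 < k /\ allQ P L /\ Inv (p_init Pi) (p_trans Pi) (p_bad Pi) L.
Proof.
  induction 1 as [iota tau phi Cphi Pphi Hi Ht
                 | iota tau beta phi k Cphi D [L [HL [Hk [HP [A [B C]]]]]] He
                 | iota tau beta phi k1 k2 _ Cphi D1 [L1 [HL1 [Hk1 [HP1 [A1 [B1 C1]]]]]]
                     D2 [L2 [HL2 [Hk2 [HP2 [A2 [B2 C2]]]]]]].
  - exists [:: phi]; do 3 split => //=.
    split; [|split].
    + move=> M rho Hio; split => //; exact: Hi.
    + move=> M rho [H1 _] Htau; split => //.
      apply/(holds_tag true M phi rho); apply: Ht => /=; split => //.
      exact/(holds_tag false M phi rho).
    + by move=> M rho [H1 _] /= H2.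
  - exists L; do 3 split => //; split; [exact: A|split; [exact: B|]].
    move=> M rho HLh Hb; apply: (C M rho HLh) => /= Hp.
    exact: (He M rho Hp Hb).
  - exists (L1 ++ L2); split; first by rewrite size_cat HL1 HL2.
    split; first by rewrite addn_gt0 Hk1.
    split; first by apply/allQ_cat.
    have Phi : forall M rho, allQ (holds M rho) L1 -> holds M rho phi.
      by move=> M rho H; apply: NNPP; apply: C1 H.
    split; [|split].
    + move=> M rho Hio; apply/allQ_cat.
      have H1 := A1 M rho Hio; split => //; apply: A2 => /=; split => //; exact: Phi.
    + move=> M rho /allQ_cat [H1 H2] Htau; apply/allQ_cat.
      have H1' := B1 M rho H1 Htau; split => //.
      apply: B2 => //=; split => //; split.
      * exact/(holds_tag false M phi rho)/Phi.
      * exact/(holds_tag true M phi rho)/Phi.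
    + move=> M rho /allQ_cat [H1 H2] Hb.
      apply: (C2 M rho H2) => /=; split => //; exact: Phi.
Qed.

Lemma holds_big_and {S : vocab} (M : structure S) rho (a : form S) l :
  holds M rho (big_and a l) <-> allQ (holds M rho) (a :: l).
Proof.
  elim: l a => [|b l IH] a /=; first tauto.
  rewrite /big_and /= -/(big_and (FAnd a b) l) IH /=; tauto.
Qed.

Lemma closed_big_and {S : vocab} (a : form S) l :
  allQ (@Defs.closed _) (a :: l) -> Defs.closed (big_and a l).
Proof.
  elim: l a => [|b l IH] a /=; first by case.
  move=> [Ca [Cb Cl]]; rewrite /big_and /= -/(big_and (FAnd a b) l).
  apply: IH => /=; split => //.
  by move=> x /= [H|H]; [apply: Ca H | apply: Cb H].
Qed.

Lemma allQ_nth {T} (Q : T -> Prop) (a : T) l :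
  allQ Q l -> forall i, i < size l -> Q (nth a l i).
Proof.
  elim: l => [|x l IH] //= [Qx Ql] [|i] //= Hi; exact: IH.
Qed.

Lemma part1 (S : vocab) (P : form S -> Prop) (n : nat) (Pi : problem S) :
  closed_class P -> provable_FI_n P n Pi -> provable_F (wedge_n n P) Pi.
Proof.
  move=> CP [k [Hkn D]].
  have [L [HL [Hk [HP [A [B C]]]]]] := @inv_of_deriv _ _ _ _ D.
  case: L HL HP A B C => [|a l] HL HP A B C; first by rewrite -HL in Hk.
  destruct Pi as [iota tau beta]; simpl in *.
  have Cl : Defs.closed (big_and a l).
    apply: closed_big_and; case: HP => Pa Pl; split; [exact: CP | exact: (@allQ_impl _ P _ l CP Pl)].
  exists 1; apply: (@d_cons _ false _ iota tau beta (big_and a l) 1 Cl).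
  - apply: d_ind => //.
    + exists a, l; split; first by rewrite HL.
      case: HP => Pa Pl; split => //; split => //; exact: allQ_nth.
    + by move=> M rho /= Hio; apply/holds_big_and; apply: A.
    + move=> M rho /= [H1 H2].
      apply/(holds_tag true M _ rho)/holds_big_and; apply: B => //.
      exact/holds_big_and/(holds_tag false M _ rho).
  - move=> M rho /= H; apply: C; exact/holds_big_and.
Qed.

Definition Sn : vocab :=
  @Vocab Empty_set (fun f : Empty_set => match f with end) nat (fun _ => 0).

Definition atom (i : nat) : form Sn := @FRel Sn i (fun _ => Var 0).

Fixpoint conjN (m : nat) : form Sn :=
  match m with 0 => FTrue | m'.+1 => FAnd (atom m') (conjN m') end.

Fixpoint alist (m : nat) : seq (form Sn) :=
  match m with 0 => [::] | m'.+1 => atom m' :: alist m' end.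

Definition idx (phi : form Sn) : nat := match phi with FRel r _ => r | _ => 0 end.

Definition Mj (j : nat) : structure Sn :=
  @Structure Sn unit tt (fun f _ => match (f : Empty_set) return unit with end)
    (fun (r : nat) _ => r <> j).

Lemma closed_atom i : Defs.closed (atom i).
Proof. by move=> x /= [[m Hm]]. Qed.

Lemma closed_conjN m : Defs.closed (conjN m).
Proof.
  elim: m => [|m IH] x //= [H|H]; [exact: closed_atom H | exact: IH H].
Qed.

Lemma build {S : vocab} (P : form S -> Prop) (l : seq (form S)) :
  forall (a : form S) (iota : form S) (tau : form (dbl S)) (beta : form S),
  (forall M rho, ~ holds M rho iota) -> (forall M rho, ~ holds M rho tau) ->
  P a -> Defs.closed a -> allQ P l -> allQ (@Defs.closed _) l ->
  (forall M rho, holds M rho a -> allQ (holds M rho) l -> ~ holds M rho beta) ->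
  derives true P (Problem iota tau beta) (size l).+1.
Proof.
  elim: l => [|b l IH] a iota tau beta Hi Ht Pa Ca Pl Cl H.
  - apply: (@d_cons _ true _ iota tau beta a 1 Ca).
    + apply: d_ind => //.
      * by move=> M rho Hio; exfalso; apply: Hi Hio.
      * by move=> M rho [_ Htau]; exfalso; apply: Ht Htau.
    + by move=> M rho Ha Hb; apply: (H M rho Ha I Hb).
  - case: Pl => Pb Pl; case: Cl => Cb Cl.
    have D1 : derives true P (Problem iota tau (FNot a)) 1.
      apply: d_ind => //.
      * by move=> M rho Hio; exfalso; apply: Hi Hio.
      * by move=> M rho [_ Htau]; exfalso; apply: Ht Htau.
    have D2 := IH b (FAnd iota a) (FAnd tau (FAnd (unprimed a) (primed a))) (FAnd beta a).
    have := @d_inc _ true P iota tau beta a 1 (size l).+1 erefl Ca D1.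
    apply; apply: D2 => //.
    + by move=> M rho [Hio _]; apply: Hi Hio.
    + by move=> M rho [Htau _]; apply: Ht Htau.
    + by move=> M rho Hb Hl [Hbeta Ha]; apply: (H M rho Ha (conj Hb Hl) Hbeta).
Qed.

Lemma alist_conj M rho m : allQ (holds M rho) (alist m) -> holds M rho (conjN m).
Proof. elim: m => [|m IH] //= [H1 H2]; split => //; exact: IH. Qed.

Lemma conj_atom {M : structure Sn} {rho} {m} : holds M rho (conjN m) -> forall i, i < m -> holds M rho (atom i).
Proof.
  elim: m => [|m IH] //= [H1 H2] i; rewrite ltnS leq_eqVlt => /orP [/eqP ->|Hi] //.
  exact: IH.
Qed.

Lemma pigeon (s : seq nat) n : size s < n -> exists2 j, j < n & j \notin s.
Proof.
  move=> Hs; case: (boolP (all (fun j => j \in s) (iota 0 n))) => [/allP Hall | /allPn [j Hj Hn]].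
  - have := uniq_leq_size (iota_uniq 0 n) Hall; rewrite size_iota => Hle.
    by move: (leq_trans Hs Hle); rewrite ltnn.
  - by exists j => //; move: Hj; rewrite mem_iota.
Qed.

Lemma part2 n : 0 < n ->
      exists (S : vocab) (P : form S -> Prop) (Pi : problem S),
        closed_class P /\ is_safety_problem Pi /\
        provable_FI_n P n Pi /\ ~ provable_FI_n P n.-1 Pi.
Proof.
  case: n => [|m] // _.
  pose P := fun phi => exists i, i < m.+1 /\ phi = atom i.
  exists Sn, P, (Problem FFalse FFalse (FNot (conjN m.+1))).
  have CP : closed_class P by move=> phi [i [_ ->]]; apply: closed_atom.
  split => //; split.
    split; first by move=> x. split; first by move=> x. move=> x H; exact: (closed_conjN m.+1 x H).
  split.
  - exists m.+1; split => //.
    have Hsz : size (alist m) = m by elim: (m) => //= k ->.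
    suff D : derives true P (Problem FFalse FFalse (FNot (conjN m.+1))) (size (alist m)).+1
      by rewrite Hsz in D.
    apply: build.
    + by move=> M rho.
    + by move=> M rho.
    + by exists m.
    + exact: closed_atom.
    + have : forall k, k <= m -> allQ P (alist k).
        elim=> [|k IHk] //= Hk; split; [exists k; split => //; apply: leq_trans Hk _| apply: IHk; exact: ltnW].
        by [].
      by apply.
    + elim: (m) => [|k IHk] //=; split => //; exact: closed_atom.
    + move=> M rho Ha Hl /= Hn; apply: Hn; split => //; exact: alist_conj.
  - move=> [k [Hk D]].
    have [L [HL [_ [HP [_ [_ C]]]]]] := @inv_of_deriv _ _ _ _ D.
    have [j Hj Hjs] : exists2 j, j < m.+1 & j \notin map idx L.
      by apply: pigeon; rewrite size_map HL ltnS.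
    have HLh : allQ (holds (Mj j) (fun _ => tt)) L.
      elim: L {HL C} HP Hjs => [|x L IHL] //= [[i [Hi ->]] HPL].
      rewrite in_cons negb_or => /andP [Hji Hjn]; split; last exact: IHL.
      by move=> /= Hij; rewrite Hij eqxx in Hji.
    apply: (C _ _ HLh) => Hc.
    have Hc' : holds (Mj j) (fun _ => tt) (conjN m.+1) by exact: Hc.
    by have := conj_atom Hc' j Hj.
Qed.

Theorem theorem4p7 :
  (forall (S : vocab) (P : form S -> Prop) (n : nat) (Pi : problem S),
      closed_class P -> is_safety_problem Pi ->
      provable_FI_n P n Pi -> provable_F (wedge_n n P) Pi)
  /\
  (forall n : nat, 0 < n ->
      exists (S : vocab) (P : form S -> Prop) (Pi : problem S),
        closed_class P /\ is_safety_problem Pi /\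
        provable_FI_n P n Pi /\ ~ provable_FI_n P n.-1 Pi).
Proof.
  split; first by move=> S P n Pi CP _; apply: part1.
  exact: part2.
Qed.
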